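(* Let $\mathsf{F}(X)=X+(X\times X)$ and $\mathsf{B}=\mathcal{P}$ be the interaction and observation functors, and let $(X,f)$ be an $(\mathsf{F},\mathsf{B})$-dialgebra. An equivalence relation $\mathcal{R}\subseteq X\times X$ is the kernel $\{(x,y)\mid h(x)=h(y)\}$ of some homomorphism $h:(X,f)\to(Y,g)$ (for some $(\mathsf{F},\mathsf{B})$-dialgebra $(Y,g)$) if and only if for all $(x_1,x_2)\in\mathcal{R}$, $(y_1,y_2)\in\mathcal{R}$ and $z_1\in X$: (i) if $x_1\to z_1$ then there is $z_2$ with $x_2\to z_2$ and $(z_1,z_2)\in\mathcal{R}$; and (ii) if $(x_1,y_1)\to z_1$ then there is $z_2$ with $(x_2,y_2)\to z_2$ and $(z_1,z_2)\in\mathcal{R}$. As a corollary, the kernel of the canonical map of the bisimilarity quotient of $(X,f)$ (i.e. dialgebraic bisimilarity $\sim_f$) is the largest equivalence relation satisfying (i) and (ii).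
   Context: For functors $\mathsf{F},\mathsf{B}:\mathbf{Set}\to\mathbf{Set}$, an $(\mathsf{F},\mathsf{B})$-dialgebra is a pair $(X,f)$ with $X$ a set and $f:\mathsf{F}X\to\mathsf{B}X$ a function; a homomorphism $h:(X,f)\to(Y,g)$ is a function $h:X\to Y$ with $g\circ\mathsf{F}h=\mathsf{B}h\circ f$. The interaction functor is $\mathsf{F}(X)=X+(X\times X)$ with $\mathsf{F}h(x)=h(x)$ and $\mathsf{F}h(x,y)=(h(x),h(y))$; the observation functor is $\mathsf{B}(X)=\mathcal{P}(X)$ with $\mathsf{B}h(S)=h[S]$. Elements of $X$ and of $X\times X$ are regarded as elements of $\mathsf{F}X$ without coproduct tags. Notation: $x\to z$ means $z\in f(x)$, and $(x,y)\to z$ means $z\in f(x,y)$. Dialgebraic bisimilarity: $x\sim_f y$ iff some homomorphism out of $(X,f)$ identifies $x$ and $y$. The bisimilarity quotient of $(X,f)$ is the wide pushout in $\mathit{Dialg}(\mathsf{F},\mathsf{B})$ of all quotients (epimorphisms modulo isomorphism) of $(X,f)$, with canonical map the induced morphism out of $(X,f)$. *)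

(* Defs.v *)
From Stdlib Require Import RelationClasses.

Definition FF (X : Type) : Type := (X + (X * X))%type.

Definition Fmap {X Y : Type} (h : X -> Y) (u : FF X) : FF Y :=
  match u with
  | inl x => inl (h x)
  | inr (x, y) => inr (h x, h y)
  end.

(* Observation functor B(X) = P(X), subsets as predicates X -> Prop.
   An (F,B)-dialgebra on X is a map f : FF X -> (X -> Prop). *)
Definition dialg (X : Type) : Type := FF X -> X -> Prop.

(* Homomorphism condition g o F h = B h o f, with B h (S) = h[S];
   equality of subsets written out pointwise. *)
Definition is_hom {X Y : Type} (f : dialg X) (g : dialg Y) (h : X -> Y) : Prop :=
  forall (u : FF X) (z : Y), g (Fmap h u) z <-> (exists w, f u w /\ h w = z).

Definition kernel {X Y : Type} (h : X -> Y) (x y : X) : Prop := h x = h y.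

(* Conditions (i) and (ii). x -> z means f (inl x) z; (x,y) -> z means f (inr (x,y)) z. *)
Definition cond_i {X : Type} (f : dialg X) (R : X -> X -> Prop) : Prop :=
  forall x1 x2 z1, R x1 x2 -> f (inl x1) z1 -> exists z2, f (inl x2) z2 /\ R z1 z2.

Definition cond_ii {X : Type} (f : dialg X) (R : X -> X -> Prop) : Prop :=
  forall x1 x2 y1 y2 z1, R x1 x2 -> R y1 y2 -> f (inr (x1, y1)) z1 ->
    exists z2, f (inr (x2, y2)) z2 /\ R z1 z2.

Definition bisim {X : Type} (f : dialg X) (x y : X) : Prop :=
  exists (Y : Type) (g : dialg Y) (h : X -> Y), is_hom f g h /\ h x = h y.

(* Main.v *)
Require Import Defs.
From Stdlib Require Import RelationClasses.
From Stdlib Require Import FunctionalExtensionality PropExtensionality.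

Lemma cond_transfer {X : Type} (f : dialg X) (R S : X -> X -> Prop) :
  (forall x y, R x y <-> S x y) -> cond_i f S -> cond_ii f S -> cond_i f R /\ cond_ii f R.
Proof.
  intros E Hi Hii; split.
  - intros x1 x2 z1 H1 H2. apply E in H1. destruct (Hi _ _ _ H1 H2) as [z2 [A B]].
    exists z2; split; auto; apply E; auto.
  - intros x1 x2 y1 y2 z1 H1 H2 H3. apply E in H1; apply E in H2.
    destruct (Hii _ _ _ _ _ H1 H2 H3) as [z2 [A B]].
    exists z2; split; auto; apply E; auto.
Qed.

Lemma fwd {X Y : Type} (f : dialg X) (g : dialg Y) (h : X -> Y) :
  is_hom f g h -> cond_i f (kernel h) /\ cond_ii f (kernel h).
Proof.
  intros Hh; split.
  - intros x1 x2 z1 K H.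
    assert (G : g (Fmap h (inl x1)) (h z1)) by (apply Hh; eauto).
    simpl in G; unfold kernel in K; rewrite K in G.
    change (g (Fmap h (inl x2)) (h z1)) in G.
    apply Hh in G. destruct G as [w [A B]]. exists w; split; auto. unfold kernel; auto.
  - intros x1 x2 y1 y2 z1 K1 K2 H.
    assert (G : g (Fmap h (inr (x1, y1))) (h z1)) by (apply Hh; eauto).
    simpl in G; unfold kernel in K1, K2; rewrite K1, K2 in G.
    change (g (Fmap h (inr (x2, y2))) (h z1)) in G.
    apply Hh in G. destruct G as [w [A B]]. exists w; split; auto. unfold kernel; auto.
Qed.

Lemma bwd {X : Type} (f : dialg X) (R : X -> X -> Prop) :
  Equivalence R -> cond_i f R -> cond_ii f R ->
  exists (Y : Type) (g : dialg Y) (h : X -> Y),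
    is_hom f g h /\ (forall x y, R x y <-> kernel h x y).
Proof.
  intros Eq Hi Hii.
  set (h := fun x : X => fun z => R x z).
  assert (Kh : forall x y, R x y <-> h x = h y).
  { intros x y; split.
    - intros H. unfold h. apply functional_extensionality; intro z.
      apply propositional_extensionality; split; intro H'.
      + symmetry in H. transitivity x; auto.
      + transitivity y; auto.
    - intros H. assert (h y y) by (unfold h; reflexivity).
      rewrite <- H in H0. exact H0. }
  exists (X -> Prop), (fun u c => exists u', Fmap h u' = u /\ exists w, f u' w /\ h w = c), h.
  split; [|exact Kh].
  intros u z; split.
  - intros [u' [E [w [A B]]]].
    destruct u as [a | [a1 a2]], u' as [b | [b1 b2]]; simpl in E; try discriminate.
    + injection E; intro E1. apply Kh in E1.
      destruct (Hi _ _ _ E1 A) as [w' [A' B']]. exists w'; split; auto.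
      rewrite <- B. symmetry. apply Kh; auto.
    + injection E; intros E2 E1. apply Kh in E1; apply Kh in E2.
      destruct (Hii _ _ _ _ _ E1 E2 A) as [w' [A' B']]. exists w'; split; auto.
      rewrite <- B. symmetry. apply Kh; auto.
  - intros [w [A B]]. exists u; split; auto. exists w; auto.
Qed.

Inductive tc {X : Type} (S : X -> X -> Prop) : X -> X -> Prop :=
| tc_step : forall x y, S x y -> tc S x y
| tc_trans : forall x y z, tc S x y -> tc S y z -> tc S x z.

Theorem theorem1 (X : Type) (f : dialg X) :
  (forall R : X -> X -> Prop, Equivalence R ->
     ((exists (Y : Type) (g : dialg Y) (h : X -> Y),
          is_hom f g h /\ (forall x y, R x y <-> kernel h x y))
      <-> (cond_i f R /\ cond_ii f R)))
  /\
  (Equivalence (bisim f) /\ cond_i f (bisim f) /\ cond_ii f (bisim f) /\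
   forall R : X -> X -> Prop, Equivalence R -> cond_i f R -> cond_ii f R ->
     forall x y, R x y -> bisim f x y).
Proof.
  assert (P1 : forall R : X -> X -> Prop, Equivalence R ->
     ((exists (Y : Type) (g : dialg Y) (h : X -> Y),
          is_hom f g h /\ (forall x y, R x y <-> kernel h x y))
      <-> (cond_i f R /\ cond_ii f R))).
  { intros R Eq; split.
    - intros [Y [g [h [Hh E]]]]. destruct (fwd f g h Hh) as [A B].
      exact (cond_transfer f R _ E A B).
    - intros [A B]; apply bwd; auto. }
  set (S := fun x y : X => exists R, Equivalence R /\ cond_i f R /\ cond_ii f R /\ R x y).
  set (T := tc S).
  assert (Srefl : forall x, S x x).
  { intro x. exists eq. split; [apply eq_equivalence|]. split; [|split; [|reflexivity]].
    - intros x1 x2 z1 H H2; subst; eauto.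
    - intros x1 x2 y1 y2 z1 H1 H2 H3; subst; eauto. }
  assert (Ssym : forall x y, S x y -> S y x).
  { intros x y [R [E [A [B C]]]]. exists R; split; [exact E|]; split; [exact A|]; split; [exact B|]. apply (@Equivalence_Symmetric _ R E); auto. }
  assert (Tsym : forall x y, T x y -> T y x).
  { intros x y H; induction H. apply tc_step; auto. eapply tc_trans; eauto. }
  assert (TEq : Equivalence T).
  { split.
    - intro x; apply tc_step; auto.
    - intros x y; apply Tsym.
    - intros x y z; apply tc_trans. }
  assert (Ti : cond_i f T).
  { intros x1 x2 z1 H; revert z1; induction H; intros z1 Hf.
    - destruct H as [R [E [A [B C]]]]. destruct (A _ _ _ C Hf) as [z2 [F G]].
      exists z2; split; auto. apply tc_step. exists R; auto.
    - destruct (IHtc1 _ Hf) as [z2 [F G]]. destruct (IHtc2 _ F) as [z3 [F' G']].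
      exists z3; split; auto. eapply tc_trans; eauto. }
  assert (Tl : forall x1 x2, T x1 x2 -> forall y z1, f (inr (x1, y)) z1 ->
             exists z2, f (inr (x2, y)) z2 /\ T z1 z2).
  { intros x1 x2 H; induction H; intros w z1 Hf.
    - destruct H as [R [E [A [B C]]]].
      destruct (B _ _ w w _ C (@Equivalence_Reflexive _ R E w) Hf) as [z2 [F G]].
      exists z2; split; auto. apply tc_step. exists R; auto.
    - destruct (IHtc1 _ _ Hf) as [z2 [F G]]. destruct (IHtc2 _ _ F) as [z3 [F' G']].
      exists z3; split; auto. eapply tc_trans; eauto. }
  assert (Tr : forall y1 y2, T y1 y2 -> forall x z1, f (inr (x, y1)) z1 ->
             exists z2, f (inr (x, y2)) z2 /\ T z1 z2).
  { intros y1 y2 H; induction H; intros w z1 Hf.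
    - destruct H as [R [E [A [B C]]]].
      destruct (B w w _ _ _ (@Equivalence_Reflexive _ R E w) C Hf) as [z2 [F G]].
      exists z2; split; auto. apply tc_step. exists R; auto.
    - destruct (IHtc1 _ _ Hf) as [z2 [F G]]. destruct (IHtc2 _ _ F) as [z3 [F' G']].
      exists z3; split; auto. eapply tc_trans; eauto. }
  assert (Tii : cond_ii f T).
  { intros x1 x2 y1 y2 z1 H1 H2 Hf.
    destruct (Tl _ _ H1 _ _ Hf) as [z2 [F G]].
    destruct (Tr _ _ H2 _ _ F) as [z3 [F' G']].
    exists z3; split; auto. eapply tc_trans; eauto. }
  assert (Max : forall R : X -> X -> Prop, Equivalence R -> cond_i f R -> cond_ii f R ->
     forall x y, R x y -> bisim f x y).
  { intros R E A B x y H. destruct (proj2 (P1 R E) (conj A B)) as [Y [g [h [Hh K]]]].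
    exists Y, g, h; split; auto. apply K; auto. }
  assert (BT : forall x y, bisim f x y <-> T x y).
  { intros x y; split.
    - intros [Y [g [h [Hh K]]]]. apply tc_step. exists (kernel h).
      destruct (fwd f g h Hh) as [A B]. split; [|auto].
      unfold kernel; split; [intro; reflexivity | intros a b E; symmetry; auto
        | intros a b c E1 E2; transitivity (h b); auto].
    - intros H; apply (Max T); auto. }
  split; [exact P1|].
  destruct (cond_transfer f (bisim f) T BT Ti Tii) as [A B].
  split; [|auto].
  split.
  - intro x; apply BT; reflexivity.
  - intros x y H; apply BT; apply BT in H; symmetry; auto.
  - intros x y z H1 H2; apply BT; apply BT in H1; apply BT in H2; transitivity y; auto.
Qed.
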